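(* Let $\alpha,\beta\in(0,1)$, $\gamma>0$, $m=\alpha n^\beta$, and $\lambda^*=\frac{\gamma}{1-\beta}$. Then for all $\lambda<\lambda^*$, $$\lim_{n\to\infty}\frac{\sum_{1\le j\le\lambda m/\log_2 n}\binom{n}{j}}{2^{\gamma m}}=0.$$ *)

(* Defs.v *)
From HB Require Import structures.
From mathcomp Require Import all_boot all_order all_algebra.
From mathcomp Require Import all_classical all_reals all_analysis.
Set Implicit Arguments. Unset Strict Implicit. Unset Printing Implicit Defensive.
Import Order.TTheory GRing.Theory Num.Theory.
Local Open Scope ring_scope.

Definition log2 {R : realType} (x : R) : R := ln x / ln 2.

Definition mval {R : realType} (alpha beta : R) (n : nat) : R :=
  alpha * (n%:R `^ beta).

(* sum_{1 <= j <= lambda m / log2 n} C(n, j)  (j ranges over naturals;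
   terms with j > n vanish anyway, so we range over j <= n) *)
Definition binsum {R : realType} (alpha beta lambda : R) (n : nat) : R :=
  \sum_(1 <= j < n.+1 | j%:R <= lambda * mval alpha beta n / log2 (n%:R : R))
     ('C(n, j))%:R.

Definition binom_ratio {R : realType} (alpha beta gamma lambda : R) (n : nat) : R :=
  binsum alpha beta lambda n / (2 `^ (gamma * mval alpha beta n)).

(* Main.v *)
Require Import Defs.
From HB Require Import structures.
From mathcomp Require Import all_boot all_order all_algebra.
From mathcomp Require Import all_classical all_reals all_analysis.
Import Order.TTheory GRing.Theory Num.Theory.
Local Open Scope ring_scope.
Local Open Scope classical_set_scope.
Lemma binsum_le (R : realType) (alpha beta lambda t : R) (n : nat) :
  0 <= t ->
  binsum alpha beta lambda n <=
  expR (t * (lambda * mval alpha beta n / log2 (n%:R : R))) *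
  expR (n%:R * expR (- t)).
Proof.
move=> t0; set J := lambda * _ / _.
rewrite /binsum big_mkcond /=.
apply: (@le_trans _ _ (\sum_(1 <= j < n.+1) expR (t * J) * (expR (- t) ^+ j *+ 'C(n, j)))).
  apply: ler_sum => j _; case: ifP => hj.
    have h1 : 1 <= expR (t * J) * expR (- t) ^+ j.
      rewrite -expRM_natl -expRD; apply: le_trans (expR_ge1Dx _).
      rewrite lerDl mulrN subr_ge0 mulrC; exact: ler_wpM2l.
    by rewrite mulrnAr -(mulr_natr (expR _ * _)) -[X in X <= _]mul1r ler_wpM2r ?ler0n.
  by rewrite mulr_ge0 // ?expR_ge0 // mulrn_wge0 // exprn_ge0 // expR_ge0.
apply: (@le_trans _ _ (\sum_(0 <= j < n.+1) expR (t * J) * (expR (- t) ^+ j *+ 'C(n, j)))).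
  rewrite (@big_ltn _ _ _ 0 n.+1) // lerDr.
  by rewrite mulr_ge0 // ?expR_ge0 // mulrn_wge0 // exprn_ge0 // expR_ge0.
rewrite big_mkord -mulr_sumr -exprD1n ler_pM2l ?expR_gt0 //.
rewrite expRM_natl lerXn2r ?nnegrE ?addr_ge0 ?expR_ge0 //.
by rewrite addrC expR_ge1Dx.
Qed.
From mathcomp Require Import ring lra.
Lemma ratio_le (R : realType) (alpha beta gamma lambda eta : R) (n : nat) :
  (0 < n)%N -> 1 <= ln (n%:R : R) -> 0 <= 1 - beta + eta ->
  binom_ratio alpha beta gamma lambda n <=
  expR (((1 - beta + eta) * lambda - gamma) * alpha * ln 2 * expR (beta * ln (n%:R : R))
        + expR ((beta - eta) * ln (n%:R : R))).
Proof.
move=> n0 hL hb.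
have hn : (n%:R : R) = expR (ln (n%:R : R)) by rewrite lnK // posrE ltr0n.
have hm : mval alpha beta n = alpha * expR (beta * ln (n%:R : R)).
  by rewrite /mval /powR pnatr_eq0 gtn_eqF.
have h2 : (2 : R) `^ (gamma * mval alpha beta n) = expR (gamma * mval alpha beta n * ln 2).
  by rewrite /powR pnatr_eq0.
set L := ln (n%:R : R) in hn hm hL *.
set t := (1 - beta + eta) * L.
have t0 : 0 <= t by rewrite mulr_ge0 //; lra.
rewrite /binom_ratio h2 ler_pdivrMr ?expR_gt0 //.

apply: le_trans (@binsum_le R alpha beta lambda t n t0) _.
rewrite -!expRD ler_expR /log2 hm.
have -> : (n%:R : R) * expR (- t) = expR ((beta - eta) * L).
  by rewrite {1}hn -expRD /t; congr expR; ring.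
have L0 : L != 0 by apply/negP => /eqP L0; move: hL; rewrite L0; lra.
have l2 : ln (2 : R) != 0 by rewrite gt_eqF // ln_gt0 // ltr1n.
rewrite /t le_eqVlt; apply/orP; left; apply/eqP; rewrite -/L; field; exact/andP.
Qed.
Theorem lemma9 (R : realType) (alpha beta gamma lambda : R)
  (ha0 : 0 < alpha) (ha1 : alpha < 1) (hb0 : 0 < beta) (hb1 : beta < 1)
  (hg : 0 < gamma) (hl : lambda < gamma / (1 - beta)) :
  binom_ratio alpha beta gamma lambda @ \oo --> 0.
Proof.
have hd : 0 < gamma - (1 - beta) * lambda.
  by rewrite subr_gt0 mulrC -ltr_pdivlMr // subr_gt0.
set eta := (gamma - (1 - beta) * lambda) / (2 * (`|lambda| + 1)).
have eta0 : 0 < eta by rewrite divr_gt0 // mulr_gt0 // ltr_pwDr.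
have heta : eta * (`|lambda| + 1) = (gamma - (1 - beta) * lambda) / 2.
  rewrite /eta; field; rewrite gt_eqF // ltr_pwDr //.
have hel : eta * lambda <= eta * `|lambda| by apply: ler_wpM2l; [exact: ltW | exact: ler_norm].
set a := ((1 - beta + eta) * lambda - gamma) * alpha * ln (2 : R).
have l2 : 0 < ln (2 : R) by rewrite ln_gt0 // ltr1n.
have a0 : a < 0.
  rewrite /a nmulr_rlt0 // nmulr_rlt0 //; lra.
apply/cvgr0Pnorm_lt => e e0.
set K := 1 + `|ln (- a / 2)| / eta + `|2 * ln e / a| / beta.
exists (Num.trunc (expR K)).+1 => // n /= hN.
have hK : expR K < n%:R.
  apply: lt_le_trans (real_truncnS_gt _) _; first exact: num_real.
  by rewrite ler_nat.
have n0 : (0 < n)%N by apply: leq_trans hN.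
have hLK : K <= ln (n%:R : R).
  by rewrite -[X in X <= _]expRK ler_ln ?posrE ?expR_gt0 ?ltr0n // ltW.
set L := ln (n%:R : R) in hLK *.
have n1 : 0 <= `|ln (- a / 2)| / eta by rewrite divr_ge0 // ltW.
have n2 : 0 <= `|2 * ln e / a| / beta by rewrite divr_ge0 // ltW.
rewrite /K in hLK.
have hL1 : 1 <= L by lra.
have hb : 0 <= 1 - beta + eta by lra.
rewrite ger0_norm; last first.
  rewrite /binom_ratio divr_ge0 ?powR_ge0 // /binsum; apply: sumr_ge0 => i _; exact: ler0n.
apply: le_lt_trans (@ratio_le R alpha beta gamma lambda eta n n0 hL1 hb) _.
rewrite -/L -/a -[X in _ < X](@lnK _ e) ?posrE // ltr_expR.
have hF : expR ((beta - eta) * L) = expR (beta * L) * expR (- (eta * L)).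
  by rewrite -expRD; congr expR; ring.
have hE0 : 0 < expR (beta * L) by apply: expR_gt0.
have h1 : expR (- (eta * L)) <= - a / 2.
  rewrite -[X in _ <= X](@lnK _ (- a / 2)) ?posrE; last by lra.
  rewrite ler_expR lerNl.
  have : `|ln (- a / 2)| / eta <= L by lra.
  rewrite ler_pdivrMr // => h; apply: le_trans (ler_norm _) _.
  by rewrite normrN (mulrC eta).
have h2 : 1 + beta * L <= expR (beta * L) by apply: expR_ge1Dx.
have h3 : 2 * ln e / a < beta * L.
  have : `|2 * ln e / a| / beta < L by lra.
  rewrite ltr_pdivrMr // => h; apply: le_lt_trans (ler_norm _) _; by rewrite (mulrC beta).
have h4 : a / 2 * (beta * L) < ln e.
  have -> : ln e = a / 2 * (2 * ln e / a) by field; rewrite lt_eqF.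
  by rewrite ltr_nM2l // ltr_pdivrMr //; lra.
rewrite hF.
have h5 : expR (beta * L) * expR (- (eta * L)) <= expR (beta * L) * (- a / 2).
  by rewrite ler_pM2l.
have h6 : a / 2 * expR (beta * L) <= a / 2 * (1 + beta * L).
  by rewrite ler_nM2l //; lra.
lra.
Qed.
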